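(* Let $A$ be an affine (finitely generated commutative) Poisson $\mathbb{C}$-algebra and let $P$ be a Poisson prime ideal of $A$ such that $A/P$ has Krull dimension $d\leq 1$. Then $P$ is residually null.
   Context: A Poisson prime ideal is a prime ideal $P$ with $\{a,P\}\subseteq P$ for all $a\in A$. A Poisson ideal $I$ is residually null if the induced Poisson bracket on $A/I$ is zero. *)

(* Defs.v *)
(* The base field C is the field of complex numbers,
   realised as complex R = R[i] for an arbitrary R : realType. *)
From HB Require Import structures.
From mathcomp Require Import all_boot all_order all_algebra.
From mathcomp Require Import reals.
From mathcomp Require Export complex.
Set Implicit Arguments. Unset Strict Implicit. Unset Printing Implicit Defensive.
Import GRing.Theory.
Local Open Scope ring_scope.

Section PoissonDefs.
Variables (K : comNzRingType) (A : comAlgType K).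

Definition is_poisson_bracket (br : A -> A -> A) : Prop :=
  [/\ (forall (k : K) (a b c : A), br (k *: a + b) c = k *: br a c + br b c),
      (forall (k : K) (a b c : A), br a (k *: b + c) = k *: br a b + br a c),
      (forall a : A, br a a = 0),
      (forall a b c : A, br a (br b c) + br b (br c a) + br c (br a b) = 0)
    & (forall a b c : A, br a (b * c) = br a b * c + b * br a c)].

(* Affine: finitely generated as a K-algebra, i.e. some finite family of
   elements lies in no proper K-subalgebra. *)
Definition subalgebra (S : A -> Prop) : Prop :=
  [/\ S 1, (forall a b, S a -> S b -> S (a + b)),
      (forall a b, S a -> S b -> S (a * b)) & (forall (k : K) a, S a -> S (k *: a))].

Definition finitely_generated : Prop :=
  exists s : seq A, forall S : A -> Prop,
    subalgebra S -> (forall x, x \in s -> S x) -> forall a, S a.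

Definition ideal (I : A -> Prop) : Prop :=
  [/\ I 0, (forall a b, I a -> I b -> I (a + b)) & (forall a b, I b -> I (a * b))].

Definition prime_ideal (I : A -> Prop) : Prop :=
  [/\ ideal I, ~ I 1 & (forall a b, I (a * b) -> I a \/ I b)].

Definition poisson_ideal (br : A -> A -> A) (I : A -> Prop) : Prop :=
  ideal I /\ forall a b, I b -> I (br a b).

Definition poisson_prime (br : A -> A -> A) (I : A -> Prop) : Prop :=
  prime_ideal I /\ poisson_ideal br I.

(* The induced bracket on A/I is zero: {a,b} lies in I for all a, b. *)
Definition residually_null (br : A -> A -> A) (I : A -> Prop) : Prop :=
  forall a b, I (br a b).

Definition strict_subset (I J : A -> Prop) : Prop :=
  (forall x, I x -> J x) /\ exists x, J x /\ ~ I x.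

(* Krull dimension of A/P is at most d: via the correspondence between prime
   ideals of A/P and prime ideals of A containing P, every strictly
   increasing chain Q 0 < Q 1 < ... < Q n of primes of A/P has n <= d. *)
Definition quot_krull_dim_le (P : A -> Prop) (d : nat) : Prop :=
  forall (n : nat) (Q : nat -> A -> Prop),
    (forall i, (i <= n)%N -> prime_ideal (Q i) /\ forall x, P x -> Q i x) ->
    (forall i, (i < n)%N -> strict_subset (Q i) (Q i.+1)) ->
    (n <= d)%N.

End PoissonDefs.

(* Main.v *)
Require Import Defs.
From HB Require Import structures.
From mathcomp Require Import all_boot all_order all_algebra.
From mathcomp Require Import reals complex ring.
From mathcomp Require Import boolp classical_sets cardinality set_interval finmap.
From mathcomp Require Import ereal measure lebesgue_measure.
Set Implicit Arguments. Unset Strict Implicit. Unset Printing Implicit Defensive.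
Import GRing.Theory Num.Theory.
Local Open Scope classical_set_scope.
Local Open Scope ring_scope.
Section Deriv.
Variables (A : comNzRingType) (D : A -> A).
Hypothesis DD : forall x y, D (x + y) = D x + D y.
Hypothesis DM : forall x y, D (x * y) = D x * y + x * D y.

Lemma D0 : D 0 = 0.
Proof. by have := DD 0 0; rewrite addr0 => /eqP; rewrite -subr_eq subrr eq_sym => /eqP. Qed.

Lemma deriv_horner (T : nzRingType) (g : {rmorphism T -> A}) (q : {poly T}) x :
  (forall c, D (g c) = 0) ->
  D ((map_poly g q).[x]) = ((map_poly g q)^`()).[x] * D x.
Proof.
move=> Dg; elim/poly_ind: q => [|q c IH].
  by rewrite rmorph0 horner0 deriv0 horner0 mul0r D0.
rewrite rmorphD rmorphM /= map_polyX map_polyC /=.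
rewrite hornerMXaddC derivMXaddC DD DM IH Dg addr0.
rewrite hornerD hornerMX; ring.
Qed.
End Deriv.

Lemma deriv_neq0 (T : idomainType) (p : {poly T}) :
  (forall n, (n%:R == 0 :> T) = (n == 0%N)) -> (1 < size p)%N -> p^`() != 0.
Proof.
move=> ch sp; apply/eqP => H; have := congr1 (fun q : {poly T} => q`_(size p).-2) H.
rewrite coef_deriv coef0 => /eqP.
rewrite -mulr_natr mulf_eq0 ch /=.
have -> : (size p).-2.+1 = (size p).-1 by case: (size p) sp => [|[|n]].
have p0 : p != 0 by rewrite -size_poly_gt0; apply: ltn_trans sp.
rewrite -lead_coefE lead_coef_eq0 (negbTE p0) /=.
by case: (size p) sp => [|[|n]].
Qed.

Section Poisson.
Variables (R : realType) (A : comAlgType R[i]) (br : A -> A -> A) (P : A -> Prop).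
Hypothesis Hbr : is_poisson_bracket br.
Hypothesis HP : poisson_prime br P.
Local Notation C := (R[i]).

Lemma brDZl k x y z : br (k *: x + y) z = k *: br x z + br y z.
Proof. by case: Hbr. Qed.
Lemma brDZr k x y z : br x (k *: y + z) = k *: br x y + br x z.
Proof. by case: Hbr. Qed.
Lemma brxx x : br x x = 0. Proof. by case: Hbr. Qed.
Lemma brM x y z : br x (y * z) = br x y * z + y * br x z.
Proof. by case: Hbr. Qed.

Lemma selfadd (x : A) : x = x + x -> x = 0.
Proof. by move=> h; apply: (@addrI _ x); rewrite addr0 -h. Qed.
Lemma br0l z : br 0 z = 0.
Proof. by apply: selfadd; have := brDZl 1 0 0 z; rewrite scale1r !addr0 scale1r. Qed.
Lemma br0r z : br z 0 = 0.
Proof. by apply: selfadd; have := brDZr 1 z 0 0; rewrite scale1r !addr0 scale1r. Qed.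
Lemma brDl x y z : br (x + y) z = br x z + br y z.
Proof. by have := brDZl 1 x y z; rewrite !scale1r. Qed.
Lemma brDr x y z : br z (x + y) = br z x + br z y.
Proof. by have := brDZr 1 z x y; rewrite !scale1r. Qed.
Lemma brD z x y : br z (x + y) = br z x + br z y. Proof. exact: brDr. Qed.
Lemma brZl k x z : br (k *: x) z = k *: br x z.
Proof. by have := brDZl k x 0 z; rewrite !addr0 br0l addr0. Qed.
Lemma brZr k x z : br z (k *: x) = k *: br z x.
Proof. by have := brDZr k z x 0; rewrite !addr0 br0r addr0. Qed.
Lemma brskew x y : br x y = - br y x.
Proof.
have := brxx (x + y); rewrite brDl !brDr !brxx add0r addr0 => /eqP.
by rewrite addr_eq0 => /eqP.
Qed.
Lemma brNl x z : br (- x) z = - br x z.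
Proof. by rewrite -scaleN1r brZl scaleN1r. Qed.
Lemma brBl x y z : br (x - y) z = br x z - br y z.
Proof. by rewrite brDl brNl. Qed.
Lemma brMl x y z : br (y * z) x = br y x * z + y * br z x.
Proof. by rewrite brskew brM !(brskew x) mulNr mulrN opprD !opprK. Qed.
Lemma br1 x : br x 1 = 0.
Proof. by apply: selfadd; have := brM x 1 1; rewrite !mulr1 mul1r; apply. Qed.
Lemma br_alg x (c : C) : br x (in_alg A c) = 0.
Proof. by rewrite /= brZr br1 scaler0. Qed.

Lemma P0 : P 0. Proof. by case: HP => [[[H0 _ _] _ _] _]. Qed.
Lemma PD x y : P x -> P y -> P (x + y). Proof. by case: HP => [[[_ H _] _ _] _]; apply: H. Qed.
Lemma PM x y : P y -> P (x * y). Proof. by case: HP => [[[_ _ H] _ _] _]; apply: H. Qed.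
Lemma PN x : P x -> P (- x). Proof. by move=> Px; rewrite -mulN1r; apply: PM. Qed.
Lemma PZ (k : C) x : P x -> P (k *: x). Proof. by move=> Px; rewrite -mulr_algl; apply: PM. Qed.
Lemma P1 : ~ P 1. Proof. by case: HP => [[_ H _] _]. Qed.
Lemma Pprime x y : P (x * y) -> P x \/ P y. Proof. by case: HP => [[_ _ H] _]; apply: H. Qed.
Lemma Pbr x y : P y -> P (br x y). Proof. by case: HP => _ [_ H]; apply: H. Qed.
Lemma Pbrl x y : P y -> P (br y x). Proof. by move=> Py; rewrite brskew; apply/PN/Pbr. Qed.

Lemma char0C n : (n%:R == 0 :> C) = (n == 0%N). Proof. exact: pnatr_eq0. Qed.
Lemma char0PC n : (n%:R == 0 :> {poly C}) = (n == 0%N).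
Proof. by rewrite -polyC_natr polyC_eq0 char0C. Qed.

Lemma halgE (a : A) (p : {poly C}) : horner_alg a p = (map_poly (in_alg A) p).[a].
Proof. by []. Qed.

Lemma indep1 a b : ~ P (br a b) -> forall p : {poly C}, P (horner_alg a p) -> p = 0.
Proof.
move=> Nab p; have [n] := ubnP (size p); elim: n p => // n IH p sp Pp.
apply/eqP; apply/negPn/negP => p0.
have [s1|s2] := leqP (size p) 1.
  move: Pp; rewrite (size1_polyC s1) horner_algC => Pc; apply: P1.
  have c0 : p`_0 != 0.
    by apply: contra p0 => /eqP c0; rewrite (size1_polyC s1) c0.
  by rewrite -(scale1r 1) -(mulVf c0) -scalerA; apply: PZ.
have d0 := deriv_neq0 char0C s2.
have H : P (br b (horner_alg a p)) by apply: Pbr.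
move: H; rewrite halgE (@deriv_horner _ (br b) (brD b) (brM b)); last first.
  by move=> c; apply: br_alg.
rewrite deriv_map -halgE => /Pprime [H|H].
  by move/eqP: d0; apply; apply: IH H; apply: leq_trans (lt_size_deriv _) _.
by apply: Nab; rewrite brskew; apply: PN.
Qed.

Lemma indep2 a b : ~ P (br a b) ->
  forall f : {poly {poly C}}, P ((map_poly (horner_alg a) f).[b]) -> f = 0.
Proof.
move=> Nab f; have [n] := ubnP (size f); elim: n f => // n IH f sf Pf.
apply/eqP; apply/negPn/negP => f0.
have [s1|s2] := leqP (size f) 1.
  move: Pf; rewrite (size1_polyC s1) map_polyC hornerC => /(indep1 Nab) c0.
  by move: f0; rewrite (size1_polyC s1) c0 eqxx.
have d0 := deriv_neq0 char0PC s2.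
have H : P (br a ((map_poly (horner_alg a) f).[b])) by apply: Pbr.
move: H; rewrite (@deriv_horner _ (br a) (brD a) (brM a)); last first.
  move=> c; change (br a (horner_alg a c) = 0); rewrite halgE (@deriv_horner _ (br a) (brD a) (brM a)) ?brxx ?mulr0 //.
  by move=> c'; apply: br_alg.
rewrite deriv_map => /Pprime [H|H]; last by [].
by move/eqP: d0; apply; apply: IH H; apply: leq_trans (lt_size_deriv _) _.
Qed.
End Poisson.
Lemma R_uncountable (R : realType) : ~ countable [set: R].
Proof.
move=> /countable_lebesgue_measure0.
rewrite -set_itvNyy lebesgue_measure_itv /=.
by []. Qed.

Lemma C_fiber (R : realType) (N : R[i] -> nat) :
  exists n, exists2 B : {fset R[i]}, [set` B] `<=` N @^-1` [set n] & (n.+1 <= #|` B|)%N.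
Proof.
have [n inf] : exists n, infinite_set (N @^-1` [set n]).
  apply: contrapT => H; apply: (@R_uncountable R).
  have fin n : finite_set (N @^-1` [set n]).
    by apply: contrapT => Hn; apply: H; exists n.
  have cC : countable [set: R[i]].
    rewrite (_ : [set: R[i]] = \bigcup_(n in [set: nat]) (N @^-1` [set n])); last first.
      by apply/seteqP; split => x // _; exists (N x).
    by apply: bigcup_countable => // k _; exact: finite_set_countable.
  move/countable_injP: cC => [f finj]; apply/countable_injP.
  exists (fun r => f (r%:C)%C) => x y _ _ /finj h.
  by have := h (in_setT _) (in_setT _) => -[].
by exists n; apply: infinite_set_fset.
Qed.

Section Span.
Variables (K : fieldType) (A : comAlgType K) (s : seq A).
Definition wprod (w : seq nat) : A := \prod_(i <- w) s`_i.
Definition gen (j : nat) : A := if @choice.unpickle (seq nat) j is Some w then wprod w else 0.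
Inductive SpN (N : nat) : A -> Prop :=
 | SpG j : (j < N)%N -> SpN N (gen j)
 | Sp0 : SpN N 0
 | SpD x y : SpN N x -> SpN N y -> SpN N (x + y)
 | SpZ (k : K) x : SpN N x -> SpN N (k *: x).

Lemma SpN_mono N M x : (N <= M)%N -> SpN N x -> SpN M x.
Proof.
move=> NM; elim=> [j jN||x1 y1 _ H1 _ H2|k x1 _ H1].
- by apply: SpG; apply: leq_trans NM.
- exact: Sp0.
- exact: SpD.
- exact: SpZ.
Qed.

Lemma SpN_coord N x : SpN N x -> exists c : 'I_N -> K, x = \sum_j c j *: gen j.
Proof.
elim=> [j jN||x1 y1 _ [c1 ->] _ [c2 ->]|k x1 _ [c1 ->]].
- exists (fun i : 'I_N => if nat_of_ord i == j then 1 else 0).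
  rewrite (bigD1 (Ordinal jN)) //= eqxx scale1r big1 ?addr0 //.
  by move=> i; rewrite -val_eqE /= => /negbTE ->; rewrite scale0r.
- by exists (fun _ => 0); rewrite big1 // => i _; rewrite scale0r.
- by exists (fun i => c1 i + c2 i); rewrite -big_split; apply: eq_bigr => i _; rewrite scalerDl.
- by exists (fun i => k * c1 i); rewrite scaler_sumr; apply: eq_bigr => i _; rewrite scalerA.
Qed.

Definition Sp x := exists N, SpN N x.

Lemma SpD' x y : Sp x -> Sp y -> Sp (x + y).
Proof.
move=> [N1 H1] [N2 H2]; exists (maxn N1 N2); apply: SpD.
  by apply: SpN_mono H1; apply: leq_maxl.
by apply: SpN_mono H2; apply: leq_maxr.
Qed.
Lemma SpZ' k x : Sp x -> Sp (k *: x).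
Proof. by move=> [N H]; exists N; apply: SpZ. Qed.
Lemma Sp0' : Sp 0. Proof. by exists 0%N; apply: Sp0. Qed.
Lemma Spgen j : Sp (gen j). Proof. by exists j.+1; apply: SpG. Qed.

Lemma wprod_gen w : wprod w = gen (choice.pickle w).
Proof. by rewrite /gen choice.pickleK. Qed.

Lemma Sp_genM i j : Sp (gen i * gen j).
Proof.
rewrite {1}/gen; case: (@choice.unpickle (seq nat) i) => [w1|]; last by rewrite mul0r; apply: Sp0'.
rewrite /gen; case: (@choice.unpickle (seq nat) j) => [w2|]; last by rewrite mulr0; apply: Sp0'.
by rewrite /wprod -big_cat /= -/(wprod _) wprod_gen; apply: Spgen.
Qed.

Lemma SpM x y : Sp x -> Sp y -> Sp (x * y).
Proof.
move=> [N1 H1] [N2 H2]; elim: H1 => [i _||x1 y1 _ IH1 _ IH2|k x1 _ IH1].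
- elim: H2 => [j _||x2 y2 _ IH1 _ IH2|k x2 _ IH1].
  + exact: Sp_genM.
  + by rewrite mulr0; apply: Sp0'.
  + by rewrite mulrDr; apply: SpD'.
  + by rewrite -scalerAr; apply: SpZ'.
- by rewrite mul0r; apply: Sp0'.
- by rewrite mulrDl; apply: SpD'.
- by rewrite -scalerAl; apply: SpZ'.
Qed.

Lemma span_all :
  (forall S : A -> Prop, subalgebra S -> (forall x, x \in s -> S x) -> forall a, S a) ->
  forall x, Sp x.
Proof.
move=> fg; apply: fg.
  split.
  - have -> : (1 : A) = wprod [::] by rewrite /wprod big_nil.
    by rewrite wprod_gen; apply: Spgen.
  - exact: SpD'.
  - exact: SpM.
  - exact: SpZ'.
move=> x xs; rewrite -(nth_index 0 xs).
have -> : s`_(index x s) = wprod [:: index x s] by rewrite /wprod big_seq1.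
rewrite wprod_gen.
exact: Spgen.
Qed.
End Span.

Lemma dependence (R : realType) (A : comAlgType R[i]) (s : seq A) (y : R[i] -> A) :
  (forall x, Sp s x) ->
  exists n (mu : 'I_n.+1 -> R[i]) (c : 'I_n.+1 -> R[i]),
    injective mu /\ (exists k, c k != 0) /\ \sum_k c k *: y (mu k) = 0.
Proof.
move=> all; have [N HN] := choice (fun mu => all (y mu)).
have [n [B BN cB]] := C_fiber N.
pose e := enum_fset B.
have sz : (n.+1 <= size e)%N by [].
pose mu (k : 'I_n.+1) := nth 0 e k.
have muB k : mu k \in B.
  by apply: mem_nth; apply: leq_trans sz.
have Hk k : SpN s n (y (mu k)).
  by have := HN (mu k); rewrite (BN (mu k) (muB k)).
have [M HM] := choice (fun k => SpN_coord (Hk k)).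
pose Mx := \matrix_(k < n.+1, j < n) M k j.
have MxE k j : Mx k j = M k j by rewrite mxE.
have rk : (0 < \rank (kermx Mx))%N.
  by rewrite mxrank_ker subn_gt0 ltnS rank_leq_col.
have [r vr] : exists r, row r (kermx Mx) != 0.
  apply: contrapT => H; move: rk; rewrite lt0n mxrank_eq0 => /eqP; apply.
  apply/row_matrixP => r; rewrite row0; apply/eqP; apply: contrapT => Hr.
  by apply: H; exists r; apply/negP.
set v := row r (kermx Mx) in vr.
have vM : v *m Mx = 0 by rewrite /v -row_mul mulmx_ker row0.
exists n, mu, (fun k => v 0 k); split; last split.
- move=> k1 k2 /eqP; rewrite /mu nth_uniq.
  + by move/eqP/val_inj.
  + exact: leq_trans (ltn_ord k1) sz.
  + exact: leq_trans (ltn_ord k2) sz.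
  + exact: fset_uniq.
- apply: contrapT => H.
  have H0 k : v 0 k = 0.
    by apply/eqP; apply: contrapT => Hk'; apply: H; exists k; apply/negP.
  by move/eqP: vr; apply; apply/rowP => k; rewrite H0 mxE.
- under eq_bigr => k _ do rewrite (HM k) scaler_sumr.
  rewrite exchange_big /=; apply: big1 => j _.
  under eq_bigr => k _ do rewrite scalerA.
  rewrite -scaler_suml.
  have -> : \sum_k v 0 k * M k j = (v *m Mx) 0 j.
    rewrite mxE; apply: eq_bigr => k _; by rewrite MxE.
  by rewrite vM mxE scale0r.
Qed.

Section Ideals.
Variables (K : comNzRingType) (A : comAlgType K).

Definition gen_ideal (I : A -> Prop) (z : A) : A -> Prop :=
  fun r => exists t u, I t /\ r = t + z * u.

Lemma ideal_gen (I : A -> Prop) z : ideal I -> ideal (gen_ideal I z).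
Proof.
case=> I0 ID IM; split.
- by exists 0, 0; rewrite mulr0 addr0.
- move=> x y [t1 [u1 [It1 ->]]] [t2 [u2 [It2 ->]]]; exists (t1 + t2), (u1 + u2).
  by split; [apply: ID | rewrite mulrDr addrACA].
- move=> x y [t [u [It ->]]]; exists (x * t), (x * u); split; first exact: IM.
  by rewrite mulrDr mulrCA.
Qed.

Lemma gen_sub (I : A -> Prop) z x : I x -> gen_ideal I z x.
Proof. by move=> Ix; exists x, 0; rewrite mulr0 addr0. Qed.

Lemma gen_z (I : A -> Prop) z : ideal I -> gen_ideal I z z.
Proof. by case=> I0 _ _; exists 0, 1; rewrite mulr1 add0r. Qed.

Lemma ideal_sum (I : A -> Prop) (m : nat) (F : 'I_m -> A) : ideal I -> (forall k, I (F k)) -> I (\sum_k F k).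
Proof.
case=> I0 ID IM HF; apply: (big_ind I) => //.
Qed.

Lemma ideal_scale (I : A -> Prop) (c : K) x : ideal I -> I x -> I (c *: x).
Proof. by case=> _ _ IM Ix; rewrite -mulr_algl; apply: IM. Qed.

Lemma exists_prime (I0 S : A -> Prop) :
  ideal I0 -> S 1 -> (forall x y, S x -> S y -> S (x * y)) ->
  (forall x, I0 x -> ~ S x) ->
  exists Q, [/\ prime_ideal Q, (forall x, I0 x -> Q x) & (forall x, Q x -> ~ S x)].
Proof.
move=> idI0 S1 SM I0S.
pose good (J : A -> Prop) := [/\ ideal J, (forall x, I0 x -> J x) & forall x, J x -> ~ S x].
pose Fam : set (set A) := fun J => J = set0 \/ good J.
have ne (J : set A) x : Fam J -> J x -> good J.
  by case=> [->|//].
have [M [FM Mmax]] : exists M, Fam M /\ forall B, M `<` B -> ~ Fam B.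
  apply: Zorn_bigcup => F FP tot.
  case: (pselect (exists J x, F J /\ J x)) => [[J0 [x0 [FJ0 J0x0]]]|H]; last first.
    left; apply/seteqP; split => x //= [J FJ Jx].
    by exfalso; apply: H; exists J, x.
  have gJ0 := ne _ _ (FP _ FJ0) J0x0.
  right; split.
  - split.
    + by exists J0 => //; case: gJ0 => -[].
    + move=> x y [J1 FJ1 J1x] [J2 FJ2 J2y].
      case: (tot _ _ FJ1 FJ2) => sub.
      * have [[_ ID _] _ _] := ne _ _ (FP _ FJ2) J2y.
        by exists J2 => //; apply: ID => //; apply: sub.
      * have [[_ ID _] _ _] := ne _ _ (FP _ FJ1) J1x.
        by exists J1 => //; apply: ID => //; apply: sub.
    + move=> x y [J FJ Jy]; have [[_ _ IM] _ _] := ne _ _ (FP _ FJ) Jy.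
      by exists J => //; apply: IM.
  - by move=> x I0x; exists J0 => //; case: gJ0 => _ H _; apply: H.
  - by move=> x [J FJ Jx]; have [_ _ H] := ne _ _ (FP _ FJ) Jx; apply: H.
have gM : good M.
  case: FM => // M0; exfalso; apply: (Mmax I0); last by right.
  rewrite M0; split => // /(_ 0) H; apply: H; by case: idI0.
case: gM => idM I0M MS.
exists M; split => //; split => //.
  by move=> M1; exact: MS M1 S1.
move=> x y Mxy; apply: contrapT => /not_orP [Nx Ny].
have hit z : ~ M z -> exists t u, M t /\ S (t + z * u).
  move=> Nz; apply: contrapT => H.
  apply: (Mmax (gen_ideal M z)).
    split; first by move=> w Mw; apply: gen_sub.
    by move=> sub; apply: Nz; apply: sub; apply: gen_z.
  right; split.
  - exact: ideal_gen.
  - by move=> w /I0M Mw; apply: gen_sub.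
  - move=> w [t [u [Mt ->]]] Sw; apply: H; by exists t, u.
have [t1 [u1 [Mt1 S1']]] := hit _ Nx.
have [t2 [u2 [Mt2 S2']]] := hit _ Ny.
apply: (MS _ _ (SM _ _ S1' S2')).
case: idM => M0 MD MM.
have -> : (t1 + x * u1) * (t2 + y * u2) =
   (t1 * (t2 + y * u2) + t2 * (x * u1)) + (x * y) * (u1 * u2).
  by rewrite mulrDl [x * u1 * _]mulrDr addrA mulrACA [t2 * _]mulrC.
apply: (MD); last by rewrite mulrC; apply: (MM).
by apply: (MD); rewrite mulrC; apply: (MM).
Qed.

Lemma lagr_ideal (Q : A -> Prop) (m : nat) (z : A) (lam : 'I_m -> K) (u y : 'I_m -> A)
    (c : 'I_m -> K) :
  ideal Q -> (forall k, Q (u k - (z - (lam k)%:A) * y k)) -> \sum_k c k *: y k = 0 ->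
  Q (\sum_k c k *: (u k * \prod_(l | l != k) (z - (lam l)%:A))).
Proof.
move=> idQ Hu Hy.
have -> : \sum_k c k *: (u k * \prod_(l | l != k) (z - (lam l)%:A)) =
   \sum_k c k *: ((u k - (z - (lam k)%:A) * y k) * \prod_(l | l != k) (z - (lam l)%:A))
   + (\prod_l (z - (lam l)%:A)) * \sum_k c k *: y k.
  rewrite mulr_sumr -big_split /=; apply: eq_bigr => k _.
  rewrite [X in _ = _ + X * _](bigD1 k) //= -scalerAr -scalerDr; congr (_ *: _).
  by rewrite mulrBl mulrAC subrK.
rewrite Hy mulr0 addr0; apply: ideal_sum => // k.
by apply: ideal_scale => //; case: idQ => _ _ IM; rewrite mulrC; apply: IM; apply: Hu.
Qed.
End Ideals.

Lemma lagr_poly (T : idomainType) m (lam : 'I_m -> T) (d : 'I_m -> T) k0 :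
  injective lam -> d k0 != 0 ->
  \sum_k (d k)%:P * \prod_(l | l != k) ('X - (lam l)%:P) != 0.
Proof.
move=> inj dk0; apply/negP => /eqP H.
have := congr1 (fun p => p.[lam k0]) H; rewrite horner0 horner_sum (bigD1 k0) //=.
rewrite [X in _ + X = _]big1 ?addr0; last first.
  move=> k kk0; rewrite hornerM horner_prod (bigD1 k0) 1?eq_sym //=.
  by rewrite hornerXsubC subrr mul0r mulr0.
rewrite hornerM hornerC horner_prod => /eqP; rewrite mulf_eq0 (negbTE dk0) /=.
rewrite prodf_seq_eq0 => /hasP [l _] /andP [lk0].
rewrite hornerXsubC subr_eq0 => /eqP /inj E; by rewrite E eqxx in lk0.
Qed.

Theorem proposition3p2 (R : realType) (A : comAlgType R[i])
    (br : A -> A -> A) (P : A -> Prop) (d : nat) :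
  is_poisson_bracket br ->
  finitely_generated A ->
  poisson_prime br P ->
  quot_krull_dim_le P d -> (d <= 1)%N ->
  residually_null br P.
Proof.
move=> Hbr [s fg] HP Hdim d1 a b.
apply: contrapT => Nab.
have spn := span_all fg.
have idP : ideal P by case: HP => -[].
pose S1 := fun x : A => exists p : {poly R[i]}, p != 0 /\ x = horner_alg a p.
have S1_1 : S1 1 by exists 1; rewrite oner_neq0 rmorph1.
have S1M : forall x y, S1 x -> S1 y -> S1 (x * y).
  move=> x y [p [p0 ->]] [q [q0 ->]]; exists (p * q); by rewrite mulf_neq0 // rmorphM.
have hX c : horner_alg a ('X - c%:P) = a - c%:A.
  by rewrite rmorphB /= horner_algX horner_algC.
have [mu Hmu] : exists mu : R[i], forall x, gen_ideal P (b - mu%:A) x -> ~ S1 x.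
  apply: contrapT => H.
  have H' : forall mu, exists pu : {poly R[i]} * A,
      pu.1 != 0 /\ P (horner_alg a pu.1 - (b - mu%:A) * pu.2).
    move=> mu; apply: contrapT => H2; apply: H; exists mu => x [t [u [Pt ->]]] [p [p0 E]].
    by apply: H2; exists (p, u); split => //=; rewrite -E addrK.
  have [pu Hpu] := choice H'.
  have [n [m [c [minj [[k0 ck0] Hdep]]]]] := dependence (fun mu => (pu mu).2) spn.
  have := @lagr_ideal _ _ P _ b m (fun k => horner_alg a (pu (m k)).1)
     (fun k => (pu (m k)).2) c idP (fun k => (Hpu (m k)).2) Hdep.
  set F := \sum_k ((c k)%:P * (pu (m k)).1)%:P * \prod_(l | l != k) ('X - ((m l)%:P)%:P).
  have -> : \sum_k c k *: (horner_alg a (pu (m k)).1 * \prod_(l | l != k) (b - (m l)%:A))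
      = (map_poly (horner_alg a) F).[b].
    rewrite rmorph_sum horner_sum; apply: eq_bigr => k _.
    rewrite rmorphM /= map_polyC hornerM hornerC rmorph_prod horner_prod /= rmorphM /=.
    rewrite horner_algC mulr_algl -scalerAl; congr (_ *: (_ * _)); apply: eq_bigr => l _.
    by rewrite rmorphB /= map_polyX map_polyC /= hornerXsubC horner_algC.
  move=> /(indep2 Hbr HP Nab) F0.
  have : F != 0.
    apply: (@lagr_poly _ _ (fun l => (m l)%:P) (fun k => (c k)%:P * (pu (m k)).1) k0).
      by move=> l1 l2 /polyC_inj /minj.
    by rewrite mulf_neq0 ?polyC_eq0 // (Hpu (m k0)).1.
  by rewrite F0 eqxx.
have [Q1 [prQ1 subQ1 avQ1]] := exists_prime (ideal_gen (b - mu%:A) idP) S1_1 S1M Hmu.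
have idQ1 : ideal Q1 by case: prQ1.
have [lam Hlam] : exists lam : R[i], forall x, gen_ideal Q1 (a - lam%:A) x -> ~ (x = 1).
  apply: contrapT => H.
  have H' : forall lam, exists u, Q1 (1 - (a - lam%:A) * u).
    move=> lam; apply: contrapT => H2; apply: H; exists lam => x [t [u [Qt ->]]] E1.
    by apply: H2; exists u; rewrite -[X in Q1 (X - _)]E1 addrK.
  have [u Hu] := choice H'.
  have [n [m [c [minj [[k0 ck0] Hdep]]]]] := dependence u spn.
  have := @lagr_ideal _ _ Q1 _ a m (fun=> 1) (fun k => u (m k)) c idQ1 (fun k => Hu (m k)) Hdep.
  set G := \sum_k (c k)%:P * \prod_(l | l != k) ('X - (m l)%:P).
  have -> : \sum_k c k *: (1 * \prod_(l | l != k) (a - (m l)%:A)) = horner_alg a G.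
    rewrite rmorph_sum; apply: eq_bigr => k _.
    rewrite rmorphM /= horner_algC rmorph_prod mul1r mulr_algl; congr (_ *: _).
    by apply: eq_bigr => l _; rewrite /= hX.
  move=> QG; apply: (avQ1 _ QG); exists G; split => //.
  by apply: (@lagr_poly _ _ m c k0).
have [Q2 [prQ2 subQ2 _]] := exists_prime (S := fun x => x = 1)
   (ideal_gen (a - lam%:A) idQ1) erefl (fun x y hx hy => ltac:(by rewrite hx hy mulr1)) Hlam.
have prP : prime_ideal P by case: HP.
suff : (2 <= d)%N by move=> H2; have := leq_trans H2 d1.
apply: (Hdim 2%N (fun i => if i == 0%N then P else if i == 1%N then Q1 else Q2)).
  move=> [|[|i]] _ /=; split => //.
  - by move=> x Px; apply: subQ1; apply: gen_sub.
  - by move=> x Px; apply: subQ2; apply: gen_sub; apply: subQ1; apply: gen_sub.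
move=> [|[|i]] //= _; split.
- by move=> x Px; apply: subQ1; apply: gen_sub.
- exists (b - mu%:A); split; first by apply: subQ1; apply: gen_z.
  move=> Pb; have := indep2 Hbr HP Nab (f := 'X - (mu%:P)%:P).
  rewrite rmorphB /= map_polyX map_polyC /= hornerXsubC horner_algC => /(_ Pb) /eqP.
  by rewrite -size_poly_eq0 size_XsubC.
- by move=> x Qx; apply: subQ2; apply: gen_sub.
- exists (a - lam%:A); split; first by apply: subQ2; apply: gen_z.
  move=> Qa; apply: (avQ1 _ Qa); exists ('X - lam%:P); split; last by rewrite hX.
  by rewrite -size_poly_eq0 size_XsubC.
Qed.
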